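(* Let $p$ be a prime. The only $p$-archimedean divisibility $|$ on the field $\mathbb{Q}$ with $p\nmid1$ is the one given by the $p$-adic valuation: $a|b\Leftrightarrow v_p(a)\le v_p(b)$.
   Context: A divisibility on a commutative ring $A$ with $1\neq0$ is a binary relation $|\subseteq A\times A$ such that for all $a,b,c$: (1) $a|a$; (2) $a|b,\ b|c\Rightarrow a|c$; (3) $a|b,\ a|c\Rightarrow a|b-c$; (4) $a|b\Rightarrow ac|bc$; (5) $0\nmid1$. A divisibility on $\mathbb{Q}$ is $p$-archimedean if for every $a\in\mathbb{Q}$ there is $m\in\mathbb{Z}$ with $p^m|a$. *)

(* Defs.v *)
From mathcomp Require Import all_boot all_order all_algebra.
Set Implicit Arguments. Unset Strict Implicit. Unset Printing Implicit Defensive.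
Import Order.TTheory GRing.Theory Num.Theory.
Local Open Scope ring_scope.

Definition is_divisibility (A : comNzRingType) (dv : A -> A -> Prop) : Prop :=
  [/\ (forall a, dv a a),
      (forall a b c, dv a b -> dv b c -> dv a c),
      (forall a b c, dv a b -> dv a c -> dv a (b - c)),
      (forall a b c, dv a b -> dv (a * c) (b * c)) &
      ~ dv 0 1].

Definition p_archimedean (p : nat) (dv : rat -> rat -> Prop) : Prop :=
  forall a : rat, exists m : int, dv ((p%:R : rat) ^ m) a.

Definition vp (p : nat) (a : rat) : int :=
  (logn p `|numq a|%N)%:Z - (logn p `|denq a|%N)%:Z.

(* v_p(a) <= v_p(b) with the convention v_p(0) = +oo. *)
Definition vp_le (p : nat) (a b : rat) : Prop :=
  b = 0 \/ (a != 0 /\ vp p a <= vp p b).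

(* Main.v *)
Require Import Defs.
From mathcomp Require Import all_boot all_order all_algebra.
From mathcomp Require Import zify ring.
Import Order.TTheory GRing.Theory Num.Theory.
Local Open Scope ring_scope.

Lemma vp_frac p (n d : int) : n != 0 -> d != 0 ->
  vp p (n%:~R / d%:~R) = (logn p `|n|)%:Z - (logn p `|d|)%:Z.
Proof.
move=> n0 d0; rewrite /vp; set x := _ / _.
have x0 : x != 0 by rewrite /x mulf_neq0 ?invr_eq0 ?intr_eq0.
have E : n * denq x = numq x * d.
  apply/eqP; rewrite -(eqr_int rat) !intrM -eqr_div ?intr_eq0 ?denq_neq0 //.
  by rewrite divq_num_den.
have := congr1 (fun z => logn p `|z|) E; rewrite /= !abszM !lognM ?absz_gt0 ?denq_neq0 ?numq_eq0 //.
lia.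
Qed.

Lemma vpM p a b : a != 0 -> b != 0 -> vp p (a * b) = vp p a + vp p b.
Proof.
move=> a0 b0.
have -> : a * b = (numq a * numq b)%:~R / (denq a * denq b)%:~R.
  by rewrite !intrM invfM mulrACA !divq_num_den.
rewrite vp_frac ?mulf_neq0 ?numq_eq0 ?denq_neq0 // /vp !abszM !lognM ?absz_gt0 ?numq_eq0 ?denq_neq0 //.
lia.
Qed.

Lemma vpV p a : a != 0 -> vp p a^-1 = - vp p a.
Proof.
move=> a0.
have -> : a^-1 = (denq a)%:~R / (numq a)%:~R.
  by rewrite -{1}(divq_num_den a) invf_div.
rewrite vp_frac ?numq_eq0 ?denq_neq0 // /vp; lia.
Qed.
Section D.
Variable dv : rat -> rat -> Prop.
Variable Hd : is_divisibility dv.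

Lemma dv_refl a : dv a a. Proof. by case: Hd. Qed.
Lemma dv_trans {a b c} : dv a b -> dv b c -> dv a c. Proof. by case: Hd => _ H _ _ _; apply: H. Qed.
Lemma dv_sub {a b c} : dv a b -> dv a c -> dv a (b - c). Proof. by case: Hd => _ _ H _ _; apply: H. Qed.
Lemma dv_mul {a b} c : dv a b -> dv (a * c) (b * c). Proof. by case: Hd => _ _ _ H _; apply: H. Qed.
Lemma dv01 : ~ dv 0 1. Proof. by case: Hd. Qed.
Lemma dv0 a : dv a 0. Proof. by rewrite -(subrr a); apply: dv_sub; apply: dv_refl. Qed.
Lemma dvN {a b} : dv a b -> dv a (- b). Proof. by move=> h; rewrite -sub0r; apply: dv_sub => //; apply: dv0. Qed.
Lemma dvD {a b c} : dv a b -> dv a c -> dv a (b + c).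
Proof. by move=> h1 h2; rewrite -(opprK c); apply: dv_sub => //; apply: dvN. Qed.
Lemma dv1n (n : nat) : dv 1 n%:R.
Proof. elim: n => [|n IH]; first exact: dv0. by rewrite -addn1 natrD; apply: dvD => //; apply: dv_refl. Qed.
Lemma dv1z (z : int) : dv 1 z%:~R.
Proof. case: z => n; first exact: dv1n. by rewrite NegzE mulrNz; apply: dvN; apply: dv1n. Qed.
Lemma dv1M {x y} : dv 1 x -> dv 1 y -> dv 1 (x * y).
Proof. move=> hx hy; apply: dv_trans hy _; have := dv_mul y hx; by rewrite mul1r mulrC. Qed.
Lemma dv_ne0 {a b} : dv a b -> b != 0 -> a != 0.
Proof.
move=> h b0; apply/negP => /eqP a0; apply: dv01.
by have := dv_mul b^-1 h; rewrite a0 mul0r divff.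
Qed.
Lemma dv_red {a} b : a != 0 -> (dv a b <-> dv 1 (b / a)).
Proof.
move=> a0; split=> h.
  by have := dv_mul a^-1 h; rewrite divff.
by have := dv_mul a h; rewrite mul1r divfK.
Qed.

Variable p : nat.
Hypothesis pp : prime p.
Hypothesis Ha : p_archimedean p dv.
Hypothesis Hp : ~ dv (p%:R) 1.

Lemma unit_inv (d : nat) : ~~ (p %| d)%N -> dv 1 (d%:R^-1).
Proof.
move=> nd.
have d0 : d%:R != 0 :> rat by rewrite pnatr_eq0; apply: contra nd => /eqP ->.
have p0 : p%:R != 0 :> rat by rewrite pnatr_eq0 -lt0n prime_gt0.
case: (Ha (d%:R^-1)) => m hm.
have pm0 : (p%:R : rat) ^ m != 0 by rewrite expfz_neq0.
move/(dv_red _ pm0): hm; case: m {pm0} => k /= h.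
  have := dv1M h (dv1n (p ^ k)); by rewrite natrX divfK // expf_neq0.
have cop : coprime (p ^ k.+1) d by rewrite coprimeXl // prime_coprime.
case: (Bezoutz (p ^ k.+1)%:Z d%:Z) => u [v].
rewrite /gcdz /= (eqP cop) => E.
have E' : u%:~R * (p%:R ^+ k.+1) + v%:~R * d%:R = 1 :> rat.
  have := congr1 (fun z : int => (intr z : rat)) E; rewrite intrD !intrM rmorph1 => H; rewrite -[RHS]H; congr (_ * _ + _ * _); by rewrite -natrX.
have -> : (d%:R^-1 : rat) = u%:~R * (d%:R^-1 / (p%:R ^+ k.+1)^-1) + v%:~R.
  rewrite invrK; apply: (mulIf d0); rewrite mulVf // -[LHS]E'; field.
  done.
by apply: dvD; [apply: dv1M => //; apply: dv1z | apply: dv1z].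
Qed.

Lemma dvn_inv (n : int) : n != 0 -> ~~ (p %| `|n|)%N -> dv 1 (n%:~R^-1).
Proof.
case: n => k /= k0 hk; first exact: unit_inv.
by rewrite NegzE mulrNz invrN; apply: dvN; apply: unit_inv.
Qed.

Lemma core x : x != 0 -> (dv 1 x <-> 0 <= vp p x).
Proof.
move=> x0; rewrite /vp.
have cop := coprime_num_den x.
have n0 : numq x != 0 by rewrite numq_eq0.
have dpos : (0 < `|denq x|)%N by rewrite absz_gt0 denq_neq0.
have dE : (denq x)%:~R = (`|denq x|%N)%:R :> rat by rewrite -[in LHS]absz_denq.
have xE : x = (numq x)%:~R / (`|denq x|%N)%:R by rewrite -dE divq_num_den.
have pn : (p %| `|denq x|)%N -> ~~ (p %| `|numq x|)%N.
  move=> pd; apply/negP => pn; have := coprime_dvdl pn cop.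
  by rewrite prime_coprime // pd.
have lg : (p %| `|denq x|)%N -> (0 < logn p `|denq x|)%N.
  by move=> pd; rewrite logn_gt0 mem_primes pp dpos pd.
split => h.
  rewrite subr_ge0 lez_nat; case pd: (p %| `|denq x|)%N; last first.
    by rewrite logn_coprime // prime_coprime // pd.
  exfalso; apply: Hp.
  have := pd; rewrite dvdn_eq => /eqP dq.
  set q := (`|denq x| %/ p)%N in dq.
  have p0 : p%:R != 0 :> rat by rewrite pnatr_eq0 -lt0n prime_gt0.
  have q0 : q%:R != 0 :> rat.
    by rewrite pnatr_eq0; apply/eqP => q0; move: dpos; rewrite -dq q0.
  have h2 := dv1M (dv1M h (dv1n q)) (@dvn_inv _ n0 (pn pd)).
  have E : forall n : int, n != 0 -> n%:~R / (q%:R * p%:R) * q%:R * n%:~R^-1 = p%:R^-1 :> rat.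
    by move=> n nn0; field; rewrite p0 q0 intr_eq0 nn0.
  move: h2; rewrite {1}xE -dq natrM E // => h2.
  by have := dv_mul p%:R h2; rewrite mul1r mulVf.
have nd : ~~ (p %| `|denq x|)%N.
  apply/negP => pd; have := lg pd; have := pn pd.
  rewrite -prime_coprime // => /logn_coprime; move: h; rewrite subr_ge0 lez_nat.
  move=> h1 h2; rewrite h2 in h1; lia.
rewrite xE; apply: dv1M; first exact: dv1z.
have := @dvn_inv (`|denq x|%N) _ nd; apply; by rewrite -lt0n.
Qed.
End D.

Theorem proposition4p3 (p : nat) (dv : rat -> rat -> Prop) :
  prime p -> is_divisibility dv -> p_archimedean p dv -> ~ dv (p%:R) 1 ->
  forall a b : rat, dv a b <-> vp_le p a b.
Proof.
move=> pp Hd Ha Hp a b; rewrite /vp_le.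
have [->|b0] := eqVneq b 0.
  by split=> _; [left | exact: (dv0 dv Hd)].
split.
  move=> h; right; have a0 := dv_ne0 dv Hd h b0; split => //.
  move/(dv_red dv Hd _ a0): h => /(core dv Hd p pp Ha Hp); rewrite mulf_neq0 ?invr_eq0 //.
  by rewrite vpM ?invr_eq0 // vpV // subr_ge0; apply.
case=> [/eqP|[a0 le]]; first by rewrite (negbTE b0).
apply/(dv_red dv Hd _ a0)/(core dv Hd p pp Ha Hp); first by rewrite mulf_neq0 ?invr_eq0.
by rewrite vpM ?invr_eq0 // vpV // subr_ge0.
Qed.
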